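(* Let $p$ be an odd prime, $r,m$ positive integers and $s\in\{0,1,\dots,mp^{r-1}-1\}$. Then $$\binom{2sp+p-1}{sp+\frac{p-1}{2}}\binom{2(mp^{r-1}-s-1)p+p-1}{(mp^{r-1}-s-1)p+\frac{p-1}{2}}\equiv\binom{2s}{s}\binom{2(mp^{r-1}-s-1)}{mp^{r-1}-s-1}\pmod{p^r}.$$ *)

(* Defs.v *)
From mathcomp Require Import all_boot.

(* Main.v *)
Require Import Defs.
From mathcomp Require Import all_boot all_algebra.
From mathcomp Require Import ring zify.
Set Implicit Arguments. Unset Strict Implicit.
Import GRing.Theory.

Section S.
Variable p : nat.
Hypothesis p_gt0 : 0 < p.

Definition U N := \prod_(0 <= i < N.+1) (if p %| i then 1 else i).

Lemma US N : U N.+1 = U N * (if p %| N.+1 then 1 else N.+1).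
Proof. by rewrite /U big_nat_recr. Qed.

Lemma factU N : N`! = p ^ (N %/ p) * (N %/ p)`! * U N.
Proof.
elim: N => [|N IH]; first by rewrite div0n /U big_nat1 dvdn0.
rewrite factS IH US divnS //.
case: ifP => H /=.
  have D : N.+1 %/ p = (N %/ p).+1 by rewrite divnS // H.
  have E : N.+1 = (N %/ p).+1 * p by rewrite -D divnK.
  rewrite factS expnS {1}E. ring.
rewrite add0n. ring.
Qed.

Lemma divp_small a k : k < p -> (a * p + k) %/ p = a.
Proof. by move=> kp; rewrite divnMDl // divn_small // addn0. Qed.

Lemma binU a k : 2 * k < p ->
  'C(2 * a * p + 2 * k, a * p + k) * (U (a * p + k)) ^ 2
  = 'C(2 * a, a) * U (2 * a * p + 2 * k).
Proof.
move=> kp.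
have kp' : k < p by lia.
have h1 := @bin_fact (2 * a) a ltac:(lia).
have h2 : a * p + k <= 2 * a * p + 2 * k by lia.
have h3 := bin_fact h2.
have e1 : 2 * a * p + 2 * k - (a * p + k) = a * p + k by lia.
have e2 : 2 * a - a = a by lia.
rewrite e1 (factU (a * p + k)) (factU (2 * a * p + 2 * k)) divp_small // divp_small // in h3.
rewrite e2 in h1.
have pos : 0 < p ^ (2 * a) * (a`! * a`!) by rewrite muln_gt0 expn_gt0 p_gt0 !muln_gt0 !fact_gt0.
apply/eqP; rewrite -(eqn_pmul2l pos); apply/eqP.
transitivity ('C(2 * a * p + 2 * k, a * p + k) *
      ((p ^ a * a`! * U (a * p + k)) * (p ^ a * a`! * U (a * p + k)))).
  rewrite mul2n -addnn expnD; ring.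
rewrite h3 -h1 -(mulnA 2 a). ring.
Qed.
End S.

Section Z.
Variables p q : nat.
Hypothesis p_gt0 : 0 < p.
Hypothesis q_gt1 : 1 < q.
Local Open Scope ring_scope.

Definition P d : 'Z_q := \prod_(0 <= j < d.+1) (if (p %| j)%N then 1 else - (j%:R)).

Lemma natZ0 M : (q %| M)%N -> (M%:R : 'Z_q) = 0.
Proof. move=> h; apply: val_inj; by rewrite /= val_Zp_nat // (eqP h). Qed.

Lemma PU N : P N = (-1) ^+ (N - N %/ p) * (U p N)%:R.
Proof.
elim: N => [|N IH]; first by rewrite div0n /P /U !big_nat1 dvdn0 mulr1.
rewrite /P big_nat_recr //= -/(P N) IH US natrM divnS //.
case: ifP => H /=.
  rewrite add1n subSS !mulr1 //.
have le : (N %/ p <= N)%N by apply: leq_div.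
rewrite add0n subSn // exprS. 
rewrite mulN1r mulrN mulNr. by rewrite mulrA.
Qed.

Lemma refl M : (p %| M)%N -> (q %| M)%N -> forall d, (d < M)%N ->
  (U p (M - d - 1))%:R * P d = (U p M)%:R.
Proof.
move=> pM qM; elim => [|d IH] hd.
  rewrite /P big_nat1 dvdn0 mulr1 subn0.
  have hM : (M = (M - 1).+1)%N by lia.
  by rewrite {2}hM US -hM pM muln1.
have hc : (M - d - 1 = (M - d.+1 - 1).+1)%N by lia.
rewrite -(IH (ltnW hd)) hc US natrM /P big_nat_recr //= -/(P d) -!mulrA; congr (_ * _).
rewrite mulrC; congr (_ * _).
have hs : (M = (M - d.+1 - 1).+1 + d.+1)%N by lia.
have hdv : (p %| (M - d.+1 - 1).+1)%N = (p %| d.+1)%N.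
  by apply/idP/idP => h; [rewrite -(dvdn_addr _ h) -hs | rewrite -(dvdn_addl _ h) -hs].
rewrite hdv; case: ifP => //= _.
apply: (addIr (d.+1)%:R); rewrite addNr -natrD -hs; symmetry; exact: natZ0.
Qed.
End Z.

Lemma coprimeU p N : prime p -> coprime p (U p N).
Proof.
move=> pp; rewrite /U; apply: (big_ind (fun x => coprime p x)); first exact: coprimen1.
  by move=> x y hx hy; rewrite coprimeMr hx hy.
move=> i _; case: ifP => h; first exact: coprimen1.
by rewrite prime_coprime // h.
Qed.

Theorem lemma2p13 (p r m s : nat) :
  prime p -> odd p -> 0 < r -> 0 < m -> s < m * p ^ (r - 1) ->
  'C(2 * s * p + p - 1, s * p + (p - 1) %/ 2) *
  'C(2 * (m * p ^ (r - 1) - s - 1) * p + p - 1,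
     (m * p ^ (r - 1) - s - 1) * p + (p - 1) %/ 2)
  = 'C(2 * s, s) * 'C(2 * (m * p ^ (r - 1) - s - 1), m * p ^ (r - 1) - s - 1)
    %[mod p ^ r].
Proof.
move=> pp op r0 m0 hs.
set n := m * p ^ (r - 1) in hs *.
set b := n - s - 1.
set k := (p - 1) %/ 2.
have p_gt0 : 0 < p by exact: prime_gt0.
have hp : p = 2 * k + 1.
  rewrite /k; have := odd_double_half p; rewrite op /=.
  move=> e; rewrite -{1}e -(subnK p_gt0) -e subn1 /= -addn1 -divn2; lia.
have hn : n = s + b + 1 by rewrite /b; lia.
set q := p ^ r.
have q_gt1 : 1 < q by rewrite /q -(expn0 p) ltn_exp2l ?prime_gt1 // .
have hq : q %| n * p.
  have hr : r = (r - 1).+1 by lia.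
  by rewrite /n /q {1}hr -mulnA -expnSr dvdn_mull.
have hq2 : q %| 2 * (n * p) by apply: dvdn_mull.
have pM : p %| n * p by apply: dvdn_mull.
have pM2 : p %| 2 * (n * p) by apply: dvdn_mull.
have hqd : q = p ^ r by [].
clearbody n b k q.
have e1 : 2 * s * p + p - 1 = 2 * s * p + 2 * k by clear -hp; lia.
have e2 : 2 * b * p + p - 1 = 2 * b * p + 2 * k by clear -hp; lia.
rewrite e1 e2.
have kp : 2 * k < p by clear -hp; lia.
have Ba := binU p_gt0 s kp.
have Bb := binU p_gt0 b kp.
have hnp : n * p = s * p + b * p + p by rewrite hn; ring.
rewrite -!mulnA.
rewrite -!mulnA in Ba Bb.
have E : (2 * s + 1) * p = 2 * (s * p) + (2 * k + 1) by rewrite -hp; ring.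
have hdvp : p %| (2 * (s * p) + 2 * k).+1 by rewrite -addn1 -addnA -E dvdn_mull.
have hev : (2 * (b * p) + 2 * k) %/ p = 2 * ((b * p + k) %/ p).
  by rewrite mulnA divp_small // divp_small // ; lia.
move: (s * p) (b * p) hnp hdvp Ba Bb hev => sp bp hnp hdvp Ba Bb hev.
pose X := 'C(2 * sp + 2 * k, sp + k) * 'C(2 * bp + 2 * k, bp + k).
pose Y := 'C(2 * s, s) * 'C(2 * b, b).
pose V := U p (sp + k) ^ 2 * U p (bp + k) ^ 2.
have XY : X * V = Y * (U p (2 * sp + 2 * k) * U p (2 * bp + 2 * k)).
  rewrite /X /Y /V. transitivity (('C(2 * sp + 2 * k, sp + k) * U p (sp + k) ^ 2) *
     ('C(2 * bp + 2 * k, bp + k) * U p (bp + k) ^ 2)); first ring.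
  rewrite Ba Bb; ring.

have np1 : n * p - (n * p - 1) - 1 = 0 by clear -hnp hp; lia.
have np2 : 2 * (n * p) - (n * p - 1) - 1 = n * p by clear -hnp hp; lia.
have npa : n * p - (bp + k) - 1 = sp + k by clear -hnp hp; lia.
have npb : 2 * (n * p) - (2 * bp + 2 * k) - 1 = (2 * sp + 2 * k).+1 by clear -hnp hp; lia.
have hb1 : bp + k < n * p by clear -hnp hp; lia.
have hb2 : 2 * bp + 2 * k < 2 * (n * p) by clear -hnp hp; lia.
have hb3 : n * p - 1 < n * p by clear -hnp hp; lia.
have hb4 : n * p - 1 < 2 * (n * p) by clear -hnp hp; lia.
have R1 := refl p_gt0 q_gt1 pM hq hb1.
have R2 := refl p_gt0 q_gt1 pM2 hq2 hb2.
have R3 := refl p_gt0 q_gt1 pM hq hb3.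
have R4 := refl p_gt0 q_gt1 pM2 hq2 hb4.
rewrite npa in R1; rewrite npb US hdvp muln1 in R2; rewrite np1 in R3; rewrite np2 in R4.
rewrite (PU q p_gt0) in R1; rewrite (PU q p_gt0) in R2.
have ev : 2 * bp + 2 * k - (2 * bp + 2 * k) %/ p = 2 * (bp + k - (bp + k) %/ p).
  by rewrite hev; clear; lia.
rewrite ev exprM exprAC sqrr_sign mul1r in R2.
have U0 : U p 0 = 1 by rewrite /U big_nat1 dvdn0.
rewrite U0 mul1r in R3.
rewrite R3 in R4.
have key : ((((U p (2 * sp + 2 * k) * U p (2 * bp + 2 * k))%N)%:R : 'Z_q) = (V%:R : 'Z_q))%R.
  rewrite natrM R2 -R4 -R1 /V !natrM.
  set e := ((-1) ^+ (bp + k - (bp + k) %/ p))%R.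
  have ee : (e * e = 1)%R by rewrite -expr2 sqrr_sign.
  set A := ((U p (sp + k))%:R)%R. set B := ((U p (bp + k))%:R)%R.
  transitivity (A * A * (B * B) * (e * e))%R; first ring.
  by rewrite ee mulr1.
have uV : ((V%:R : 'Z_q) \is a GRing.unit)%R.
  by rewrite unitZpE // /V hqd coprimeXl // coprimeMr !coprimeXr // !coprimeU.
have : ((X%:R : 'Z_q) = Y%:R)%R.
  apply: (mulIr uV); by rewrite -!natrM XY natrM key natrM.
move/(congr1 val); rewrite /= !val_Zp_nat //.
Qed.
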